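(* Consider two instances of the baseline diffusion model that differ only in the new product's specification: $((v_{Hi})_{i=1}^N,s_p)$ in the first and $((v'_{Hi})_{i=1}^N,s'_p)$ in the second. Suppose $v'_{Hi}\ge v_{Hi}$ for all $i$ and $s'_p\ge s_p$. Let $D_n^t$ and $D_n'^t$ be the corresponding sets of new-product consumers. Then $D_n^t\subseteq D_n'^t$ for all $t\ge1$; equivalently, the thresholds of Proposition 1 satisfy $\underline H_t\ge\underline H'_t$ for all $t\ge2$.
   Context: Baseline diffusion model. There are $N\ge 2$ individuals $i\in\{1,\dots,N\}$ and two products, an incumbent $p_c$ and a new product $p_n$. The individuals are partitioned into $G\ge 2$ nonempty groups $N_1,\dots,N_G$. Every member of group $N_k$ has the same aspiration level $H_{N_k}$, and $H_{N_1}>\cdots>H_{N_G}$; write $H_i$ for individual $i$'s aspiration level. Consuming $p_c$ gives every individual the payoff $v_L$, where $H_{N_2}<v_L<H_{N_1}$. Consuming $p_n$ gives individual $i$ the payoff $v_{Hi}\ge H_{N_1}$. Product similarities are $s_{p_c,p_c}=s_{p_n,p_n}=1$, $s_{p_n,p_c}=s_p\in(0,1)$ and $s_{p_c,p_n}=0$. Individual similarities are $s_{i,i}=1$ and $s_{i,j}=s\in(0,1]$ for $i\ne j$. Dynamics. In period $0$ everyone consumes $p_c$ ($D_c^0=\{1,\dots,N\}$, $D_n^0=\emptyset$). For $t\ge1$, $U_i^t(p_c)=\sum_{t'=0}^{t-1}\sum_{j\in D_c^{t'}}s_{i,j}(v_L-H_i)$ and $U_i^t(p_n)=s_pU_i^t(p_c)+\sum_{t'=0}^{t-1}\sum_{j\in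 D_n^{t'}}s_{i,j}(v_{Hj}-H_i)$. Individual $i\in D_n^t$ iff $U_i^t(p_n)>U_i^t(p_c)$; otherwise $i\in D_c^t$. By Proposition 1, in every period $t$ the set $D_n^t$ equals $\{i:H_i>\underline H_t\}$ for some threshold $\underline H_t\in\mathbb R\cup\{-\infty\}$. *)

(* Defs.v *)
From HB Require Import structures.
From mathcomp Require Import all_boot all_order all_algebra.
Set Implicit Arguments. Unset Strict Implicit. Unset Printing Implicit Defensive.
Import Order.TTheory GRing.Theory Num.Theory.
Local Open Scope ring_scope.

(* Baseline diffusion model. Individuals are 'I_N; aspiration H i.
   In every period each individual consumes exactly one product, so
   D_c^t is the complement of D_n^t. *)

Definition sim {R : numDomainType} {N : nat} (s : R) (i j : 'I_N) : R :=
  if i == j then 1 else s.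

(* U_i^t(p_c), given the history [D_n^0; ...; D_n^{t-1}] *)
Definition Uc {R : numDomainType} {N : nat} (H : 'I_N -> R) (vL s : R)
  (hist : seq {set 'I_N}) (i : 'I_N) : R :=
  \sum_(D <- hist) \sum_(j in ~: D) sim s i j * (vL - H i).

(* U_i^t(p_n), given the history [D_n^0; ...; D_n^{t-1}] *)
Definition Un {R : numDomainType} {N : nat} (H : 'I_N -> R) (vL s sp : R)
  (vH : 'I_N -> R) (hist : seq {set 'I_N}) (i : 'I_N) : R :=
  sp * Uc H vL s hist i +
  \sum_(D <- hist) \sum_(j in D) sim s i j * (vH j - H i).

Definition next_Dn {R : numDomainType} {N : nat} (H : 'I_N -> R) (vL s sp : R)
  (vH : 'I_N -> R) (hist : seq {set 'I_N}) : {set 'I_N} :=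
  [set i | Uc H vL s hist i < Un H vL s sp vH hist i].

(* history [D_n^0; ...; D_n^t], with D_n^0 = set0 *)
Fixpoint history {R : numDomainType} {N : nat} (H : 'I_N -> R) (vL s sp : R)
  (vH : 'I_N -> R) (t : nat) : seq {set 'I_N} :=
  match t with
  | 0 => [:: set0]
  | t'.+1 => let h := history H vL s sp vH t' in rcons h (next_Dn H vL s sp vH h)
  end.

Definition Dn {R : numDomainType} {N : nat} (H : 'I_N -> R) (vL s sp : R)
  (vH : 'I_N -> R) (t : nat) : {set 'I_N} :=
  last set0 (history H vL s sp vH t).

(* Main.v *)
Require Import Defs.
From HB Require Import structures.
From mathcomp Require Import all_boot all_order all_algebra.
From mathcomp Require Import ring lra.
Import Order.TTheory GRing.Theory Num.Theory.
Local Open Scope ring_scope.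

Section Aux.
Variables (R : realFieldType) (N : nat) (h : 'I_N -> R) (vL s : R).

Definition g (sp : R) (vH : 'I_N -> R) (D : {set 'I_N}) (i : 'I_N) : R :=
  \sum_j sim s i j * (if j \in D then vH j - h i else (sp - 1) * (vL - h i)).

Lemma UnUc sp vH hist i :
  Un h vL s sp vH hist i - Uc h vL s hist i = \sum_(D <- hist) g sp vH D i.
Proof.
rewrite /Un /Uc.
have -> : forall a b : R, sp * a + b - a = (sp - 1) * a + b by move=> a b; ring.
rewrite (@mulr_sumr R _ hist predT) -big_split /=; apply: eq_bigr => D _.
rewrite /g [RHS](bigID (fun j => j \in D)) /= addrC (@mulr_sumr R). congr (_ + _).
  by apply: eq_bigr => j ->.
rewrite [RHS](eq_bigl (fun j : 'I_N => j \in ~: D)); last by move=> j; rewrite inE.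
by apply: eq_bigr => j; rewrite inE => /negbTE ->; rewrite mulrCA.
Qed.

Lemma sim_ge0 (i j : 'I_N) : 0 < s -> 0 <= sim s i j.
Proof. by move=> hs; rewrite /sim; case: eqP => _; [exact: ler01| exact: ltW]. Qed.

Lemma g_mono sp sp' vH vH' (D D' : {set 'I_N}) i :
  0 < s -> sp <= sp' -> sp' <= 1 -> h i <= vL -> (forall j, vH j <= vH' j) ->
  (forall j, h i <= vH j) -> D \subset D' -> g sp vH D i <= g sp' vH' D' i.
Proof.
move=> hs hsp hsp1 hiL hv hhv /subsetP sub.
apply: ler_sum => j _; apply: ler_wpM2l; first exact: sim_ge0.
case: ifP => jD; first by rewrite (sub _ jD) lerD2r.
case: ifP => jD'.
  apply: (@le_trans _ _ 0).
    by rewrite mulr_le0_ge0 ?subr_ge0 // subr_le0; exact: (le_trans hsp).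
  by rewrite subr_ge0 (le_trans (hhv j)).
by rewrite ler_wpM2r ?subr_ge0 // lerD2r.
Qed.

Lemma sum_mono (sp sp' : R) (vH vH' : 'I_N -> R) i (hist hist' : seq {set 'I_N}) :
  0 < s -> sp <= sp' -> sp' <= 1 -> h i <= vL -> (forall j, vH j <= vH' j) ->
  (forall j, h i <= vH j) -> all2 (fun D D' : {set 'I_N} => D \subset D') hist hist' ->
  \sum_(D <- hist) g sp vH D i <= \sum_(D <- hist') g sp' vH' D i.
Proof.
move=> hs hsp hsp1 hiL hv hhv; elim: hist hist' => [|D hist IH] [|D' hist'] //=.
  by rewrite !big_nil.
move=> /andP[sDD' hall]; rewrite !big_cons; apply: lerD; last exact: IH.
exact: g_mono.
Qed.

Lemma g_ge0 sp vH (D : {set 'I_N}) i :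
  0 < s -> sp < 1 -> vL < h i -> (forall j, h i <= vH j) -> 0 <= g sp vH D i.
Proof.
move=> hs hsp hiL hhv; apply: sumr_ge0 => j _; apply: mulr_ge0; first exact: sim_ge0.
case: ifP => _; first by rewrite subr_ge0.
by rewrite mulr_le0 // ?subr_le0 ?ltW.
Qed.

Lemma g0_gt0 sp vH i :
  0 < s -> sp < 1 -> vL < h i -> (forall j, h i <= vH j) -> 0 < g sp vH set0 i.
Proof.
move=> hs hsp hiL hhv; rewrite /g (bigD1 i) //= ltr_wpDr //.
  apply: sumr_ge0 => j _; apply: mulr_ge0; first exact: sim_ge0.
  by rewrite inE mulr_le0 // ?subr_le0 ?ltW.
by rewrite /sim eqxx mul1r inE -mulrNN mulr_gt0 // oppr_gt0 subr_lt0.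
Qed.

End Aux.

Lemma all2_rcons (T : Type) (r : T -> T -> bool) s s' x y :
  all2 r s s' -> r x y -> all2 r (rcons s x) (rcons s' y).
Proof.
elim: s s' => [|a s IH] [|b s'] //= => [_ ->//|/andP[-> h] hr].
exact: IH.
Qed.

Lemma all2_last (T : Type) (r : T -> T -> bool) s s' x y :
  all2 r s s' -> r x y -> r (last x s) (last y s').
Proof.
elim: s s' x y => [|a s IH] [|b s'] //= x y /andP[hab hs] _; exact: IH.
Qed.

Lemma history_head (R : numDomainType) N (H : 'I_N -> R) vL s sp vH t :
  exists r, history H vL s sp vH t = set0 :: r.
Proof.
elim: t => [|t [r IH]] /=; first by exists [::].
by rewrite IH; exists (rcons r (next_Dn H vL s sp vH (set0 :: r))).
Qed.


Lemma step (R : realFieldType) N (h : 'I_N -> R) vL s (sp sp' : R) (vH vH' : 'I_N -> R)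
  (hist hist' : seq {set 'I_N}) :
  0 < s -> sp <= sp' -> sp' < 1 -> (forall j, vH j <= vH' j) ->
  (forall i j, h i <= vH j) -> (forall i j, h i <= vH' j) ->
  all2 (fun D D' : {set 'I_N} => D \subset D') hist hist' ->
  (exists r, hist' = set0 :: r) ->
  next_Dn h vL s sp vH hist \subset next_Dn h vL s sp' vH' hist'.
Proof.
move=> hs hsp hsp1 hv hh hh' hall [r hr]; subst hist'; apply/subsetP => i.
rewrite !inE => hpos; rewrite -subr_gt0 UnUc; rewrite -subr_gt0 UnUc in hpos.
have [hiL|hiL] := lerP (h i) vL.
  apply: (lt_le_trans hpos); apply: sum_mono => //; exact: ltW.
rewrite big_cons ltr_wpDr //; last exact: g0_gt0.
by apply: sumr_ge0 => D _; apply: g_ge0.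
Qed.

Theorem lemma2 (R : realFieldType) (N G : nat) (hN : (2 <= N)%N) (hG2 : (2 <= G)%N)
  (grp : 'I_N -> 'I_G) (grp_surj : forall k : 'I_G, exists i : 'I_N, grp i = k)
  (hG : 'I_G -> R) (hG_decr : forall k l : 'I_G, (k < l)%N -> hG l < hG k)
  (vL s sp sp' : R) (vH vH' : 'I_N -> R)
  (hvL1 : forall k : 'I_G, val k = 0%N -> vL < hG k)
  (hvL2 : forall k : 'I_G, val k = 1%N -> hG k < vL)
  (hvH : forall (k : 'I_G) (i : 'I_N), val k = 0%N -> hG k <= vH i)
  (hvH' : forall (k : 'I_G) (i : 'I_N), val k = 0%N -> hG k <= vH' i)
  (hsp : 0 < sp < 1) (hsp' : 0 < sp' < 1) (hs : 0 < s <= 1)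
  (hvHle : forall i : 'I_N, vH i <= vH' i) (hsple : sp <= sp') :
  forall t : nat, (1 <= t)%N ->
    Dn (fun i => hG (grp i)) vL s sp vH t \subset
    Dn (fun i => hG (grp i)) vL s sp' vH' t.
Proof.
move=> t _.
have G0 : (0 < G)%N by apply: leq_trans hG2.
pose k0 : 'I_G := Ordinal G0.
have htop : forall i, hG (grp i) <= hG k0.
  move=> i; case: (posnP (grp i)) => [e|p].
    by have -> : grp i = k0 by apply: val_inj.
  exact: ltW (hG_decr k0 (grp i) p).
have hh : forall i j, hG (grp i) <= vH j.
  by move=> i j; apply: le_trans (htop i) (hvH k0 j erefl).
have hh' : forall i j, hG (grp i) <= vH' j.
  by move=> i j; apply: le_trans (htop i) (hvH' k0 j erefl).
case/andP: hs => hs0 _; case/andP: hsp' => _ hsp1.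
have hall : forall t, all2 (fun D D' : {set 'I_N} => D \subset D')
   (history (fun i => hG (grp i)) vL s sp vH t)
   (history (fun i => hG (grp i)) vL s sp' vH' t).
  elim=> [|n IH] /=; first by rewrite sub0set.
  apply: all2_rcons => //; apply: step => //; exact: history_head.
rewrite /Dn; apply: all2_last (hall t) _; exact: sub0set.
Qed.
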